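(* Suppose the coin process $\mathbf X$ satisfies \[ \lim_{m\to\infty}P_{X^m}(\mathcal S_m^c(\lambda))=0\quad\text{for every }\lambda>0, \] where $\mathcal S_m(\lambda)=\{x^m:\log\frac{1}{P_{X^m}(x^m)}\ge\lambda\}$. Then for every $n$ and every target distribution $P_{Y^n}$, the interval algorithm is valid, i.e. $\lim_{m\to\infty}\Pr(\phi_{\mathrm{int}}(X^m)=y^n)=P_{Y^n}(y^n)$ for every $y^n\in\mathcal Y^n$.
   Context: Logarithms are base 2. $\mathcal X=\{1,\dots,M\}$, $\mathcal Y=\{1,\dots,N\}$ are finite sets; the coin process $\mathbf X=\{X^m\}_{m\ge1}$ on $\mathcal X$ and target process $\mathbf Y=\{Y^n\}$ on $\mathcal Y$ are arbitrary processes given by consistent families of distributions. Interval algorithm: for $s\in\mathcal X^i$ define $\mathcal I_s=[\underline\alpha_s,\overline\alpha_s)$ by $\mathcal I_\bot=[0,1)$ and $\underline\alpha_{sx}=\underline\alpha_s+(\overline\alpha_s-\underline\alpha_s)\sum_{k<x}P_{X_{i+1}|X^i}(k|s)$, $\overline\alpha_{sx}=\underline\alpha_s+(\overline\alpha_s-\underline\alpha_s)\sum_{k\le x}P_{X_{i+1}|X^i}(k|s)$ (so $|\mathcal I_s|=P_{X^i}(s)$); define $\mathcal J_t$ for $t\in\mathcal Y^j$ likewise from $P_{Y_{j+1}|Y^j}$. The algorithm stops at the first $m$ with $\mathcal I_{X^m}\subseteq\mathcal J_{y^n}$ for some $y^n\in\mathcal Y^n$ and outputs that $y^n$; $\phi_{\mathrm{int}}(x^m)$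 is the output if it has stopped after reading $x^m$, and $\bot$ otherwise. *)

(* Defs.v *)
From Stdlib Require Import Reals List.
Import ListNotations.
Open Scope R_scope.

(* Sequences over an alphabet {0,...,K-1} (0-based relabelling of {1,...,K}). *)
Fixpoint seqs (K m : nat) : list (list nat) :=
  match m with
  | O => [[]]
  | S m' => flat_map (fun s => map (fun k => s ++ [k]) (seq 0 K)) (seqs K m')
  end.

Definition sumR {A} (l : list A) (f : A -> R) : R :=
  fold_right Rplus 0 (map f l).

Definition valid (K : nat) (s : list nat) : Prop := Forall (fun k => (k < K)%nat) s.

(* A process on {0..K-1}: P s = P_{X^m}(s) for |s| = m; consistent family of
   probability distributions. *)
Definition is_process (K : nat) (P : list nat -> R) : Prop :=
  (forall s, valid K s -> 0 <= P s) /\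
  (forall m, sumR (seqs K m) P = 1) /\
  (forall s, valid K s -> sumR (seq 0 K) (fun k => P (s ++ [k])) = P s).

Definition is_dist (K n : nat) (Q : list nat -> R) : Prop :=
  (forall y, valid K y -> length y = n -> 0 <= Q y) /\
  sumR (seqs K n) Q = 1.

Definition marg (K n : nat) (Q : list nat -> R) (t : list nat) : R :=
  sumR (seqs K (n - length t)) (fun u => Q (t ++ u)).

Definition log2 (x : R) : R := ln x / ln 2.

Definition cond (P : list nat -> R) (s : list nat) (k : nat) : R :=
  P (s ++ [k]) / P s.

(* one step of the interval refinement: state (s, lower, upper) *)
Definition istep (P : list nat -> R) (st : list nat * R * R) (x : nat)
  : list nat * R * R :=
  let '(s, a, b) := st in
  (s ++ [x],
   a + (b - a) * sumR (seq 0 x) (cond P s),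
   a + (b - a) * sumR (seq 0 (S x)) (cond P s)).

(* The interval I_s = [lower, upper) *)
Definition interval (P : list nat -> R) (s : list nat) : R * R :=
  let '(_, a, b) := fold_left (istep P) s ([], 0, 1) in (a, b).

Definition containedb (I J : R * R) : bool :=
  if Rle_dec (fst J) (fst I) then (if Rle_dec (snd I) (snd J) then true else false)
  else false.

Definition find_out (P Q : list nat -> R) (N n : nat) (x : list nat)
  : option (list nat) :=
  find (fun y => containedb (interval P x) (interval (marg N n Q) y)) (seqs N n).

(* phi_int(x^m): output at the first prefix length j <= m where the algorithm
   stops; None (= ⊥) if it has not stopped after reading x^m. *)
Definition phi_int (P Q : list nat -> R) (N n : nat) (x : list nat)
  : option (list nat) :=
  (fix go (l : list nat) :=
     match l with
     | [] => None
     | j :: l' => match find_out P Q N n (firstn j x) with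
                  | Some y => Some y
                  | None => go l'
                  end
     end) (seq 0 (S (length x))).

Definition prob_out (P Q : list nat -> R) (M N n m : nat) (y : list nat) : R :=
  sumR (seqs M m) (fun x => P x *
    match phi_int P Q N n x with
    | Some y' => if list_eq_dec Nat.eq_dec y' y then 1 else 0
    | None => 0
    end).

Definition prob_Sc (P : list nat -> R) (M m : nat) (lam : R) : R :=
  sumR (filter (fun x => if Rlt_dec (log2 (/ P x)) lam then true else false)
               (seqs M m)) P.

(* Main.v *)
Require Import Defs.
From Stdlib Require Import Reals List Lra Lia.
Import ListNotations.
Open Scope R_scope.

Lemma sumR_nil {A} (f : A -> R) : sumR [] f = 0.
Proof. reflexivity. Qed.
Lemma sumR_cons {A} (a : A) l f : sumR (a :: l) f = f a + sumR l f.
Proof. reflexivity. Qed.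

Lemma sumR_app {A} (l1 l2 : list A) f : sumR (l1 ++ l2) f = sumR l1 f + sumR l2 f.
Proof.
  induction l1 as [|a l1 IH]; [change ([] ++ l2) with l2; rewrite sumR_nil; lra|].
  change ((a :: l1) ++ l2) with (a :: (l1 ++ l2)). rewrite !sumR_cons, IH; lra.
Qed.

Lemma sumR_ext_in {A} (l : list A) f g : (forall x, In x l -> f x = g x) -> sumR l f = sumR l g.
Proof.
  induction l as [|a l IH]; intros H; [reflexivity|].
  rewrite !sumR_cons, (H a (or_introl eq_refl)), IH; [reflexivity|].
  intros x Hx; apply H; right; exact Hx.
Qed.

Lemma sumR_le_in {A} (l : list A) f g : (forall x, In x l -> f x <= g x) -> sumR l f <= sumR l g.
Proof.
  induction l as [|a l IH]; intros H; [rewrite !sumR_nil; lra|].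
  rewrite !sumR_cons. apply Rplus_le_compat; [apply H; left; reflexivity|].
  apply IH; intros x Hx; apply H; right; exact Hx.
Qed.

Lemma sumR_nonneg {A} (l : list A) f : (forall x, In x l -> 0 <= f x) -> 0 <= sumR l f.
Proof.
  induction l as [|a l IH]; intros H; [rewrite !sumR_nil; lra|].
  rewrite !sumR_cons. apply Rplus_le_le_0_compat; [apply H; left; reflexivity|].
  apply IH; intros x Hx; apply H; right; exact Hx.
Qed.

Lemma sumR_plus {A} (l : list A) f g : sumR l (fun x => f x + g x) = sumR l f + sumR l g.
Proof. induction l as [|a l IH]; [rewrite !sumR_nil; lra|]. rewrite !sumR_cons, IH; cbv beta; lra. Qed.

Lemma sumR_minus {A} (l : list A) f g : sumR l (fun x => f x - g x) = sumR l f - sumR l g.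
Proof. induction l as [|a l IH]; [rewrite !sumR_nil; lra|]. rewrite !sumR_cons, IH; cbv beta; lra. Qed.

Lemma sumR_scal {A} (l : list A) c f : c * sumR l f = sumR l (fun x => c * f x).
Proof. induction l as [|a l IH]; [rewrite !sumR_nil; lra|]. rewrite !sumR_cons, <- IH; cbv beta; lra. Qed.

Lemma sumR_map {A B} (h : A -> B) l f : sumR (map h l) f = sumR l (fun x => f (h x)).
Proof. unfold sumR; rewrite map_map; reflexivity. Qed.

Lemma sumR_flat_map {A B} (h : A -> list B) l f :
  sumR (flat_map h l) f = sumR l (fun x => sumR (h x) f).
Proof.
  induction l as [|a l IH]; [reflexivity|].
  change (flat_map h (a :: l)) with (h a ++ flat_map h l).
  rewrite sumR_app, sumR_cons, IH; reflexivity.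
Qed.

Lemma sumR_filter {A} (p : A -> bool) l f :
  sumR (filter p l) f = sumR l (fun x => if p x then f x else 0).
Proof.
  induction l as [|a l IH]; [reflexivity|].
  cbn [filter]. rewrite (sumR_cons a). cbv beta. destruct (p a); [rewrite sumR_cons|]; rewrite IH; lra.
Qed.

Lemma sumR_tele (h : nat -> R) st K :
  sumR (seq st K) (fun k => h (S k) - h k) = h (st + K)%nat - h st.
Proof.
  revert st; induction K as [|K IH]; intros st.
  - rewrite Nat.add_0_r. simpl seq. rewrite sumR_nil; lra.
  - change (seq st (S K)) with (st :: seq (S st) K). rewrite sumR_cons, IH.
    replace (S st + K)%nat with (st + S K)%nat by lia. cbv beta; lra.
Qed.

Lemma sumR_seq_split (f : nat -> R) j K : (j <= K)%nat ->
  sumR (seq 0 K) f = sumR (seq 0 j) f + sumR (seq j (K - j)) f.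
Proof.
  intros H. replace K with (j + (K - j))%nat at 1 by lia.
  rewrite seq_app, sumR_app. reflexivity.
Qed.

Lemma In_seqs K m x : In x (seqs K m) -> valid K x /\ length x = m.
Proof.
  revert x; induction m as [|m IH]; intros x Hx.
  - destruct Hx as [<-|[]]. split; [constructor|reflexivity].
  - simpl in Hx. apply in_flat_map in Hx as [s [Hs Hx]].
    apply in_map_iff in Hx as [k [<- Hk]]. apply in_seq in Hk.
    destruct (IH s Hs) as [Hv Hl]. split.
    + apply Forall_app; split; [exact Hv|]. constructor; [lia|constructor].
    + rewrite length_app; simpl; lia.
Qed.

Lemma seqs_In K m x : valid K x -> length x = m -> In x (seqs K m).
Proof.
  revert x; induction m as [|m IH]; intros x Hv Hl.
  - destruct x; [left; reflexivity|discriminate].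
  - destruct (exists_last (l:=x)) as [x' [k ->]]; [intros ->; discriminate|].
    apply Forall_app in Hv as [Hv1 Hv2]. inversion Hv2; subst.
    rewrite length_app in Hl; simpl in Hl.
    simpl. apply in_flat_map. exists x'. split; [apply IH; auto; lia|].
    apply in_map_iff. exists k. split; [reflexivity|]. apply in_seq. lia.
Qed.

Lemma sum_seqs_S K m f :
  sumR (seqs K (S m)) f = sumR (seqs K m) (fun s => sumR (seq 0 K) (fun k => f (s ++ [k]))).
Proof.
  change (seqs K (S m)) with (flat_map (fun s => map (fun k => s ++ [k]) (seq 0 K)) (seqs K m)).
  rewrite sumR_flat_map. apply sumR_ext_in; intros s _. rewrite sumR_map; reflexivity.
Qed.

Lemma sum_seqs_cons K r f :
  sumR (seqs K (S r)) f = sumR (seq 0 K) (fun k => sumR (seqs K r) (fun u => f (k :: u))).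
Proof.
  revert f; induction r as [|r IH]; intros f.
  - rewrite sum_seqs_S. simpl seqs. rewrite sumR_cons, sumR_nil, Rplus_0_r.
    apply sumR_ext_in; intros k _. rewrite sumR_cons, sumR_nil, Rplus_0_r. reflexivity.
  - rewrite sum_seqs_S, IH. apply sumR_ext_in; intros k' _.
    rewrite sum_seqs_S. reflexivity.
Qed.

Lemma fold_state F s :
  fold_left (istep F) s ([], 0, 1) = (s, fst (interval F s), snd (interval F s)).
Proof.
  unfold interval. induction s as [|x s IH] using rev_ind; [reflexivity|].
  rewrite !fold_left_app, IH. reflexivity.
Qed.

Lemma interval_nil F : interval F [] = (0, 1).
Proof. reflexivity. Qed.

Lemma interval_snoc F s k : interval F (s ++ [k]) =
  (fst (interval F s) + (snd (interval F s) - fst (interval F s)) * sumR (seq 0 k) (cond F s),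
   fst (interval F s) + (snd (interval F s) - fst (interval F s)) * sumR (seq 0 (S k)) (cond F s)).
Proof. unfold interval at 1. rewrite fold_left_app, fold_state. reflexivity. Qed.

Lemma valid_snoc K s k : valid K (s ++ [k]) <-> valid K s /\ (k < K)%nat.
Proof.
  unfold valid; rewrite Forall_app; split.
  - intros [H1 H2]; inversion H2; auto.
  - intros [H1 H2]; split; auto.
Qed.

Section Intervals.
Variable K L : nat.
Variable F : list nat -> R.
Hypothesis HF0 : F [] = 1.
Hypothesis Hnn : forall s, valid K s -> (length s <= L)%nat -> 0 <= F s.
Hypothesis Hsum : forall s, valid K s -> (length s < L)%nat ->
  sumR (seq 0 K) (fun k => F (s ++ [k])) = F s.

Definition Pp s j := sumR (seq 0 j) (fun i => F (s ++ [i])).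

Lemma Pp_mono s j j' : valid K s -> (length s < L)%nat -> (j <= j')%nat -> (j' <= K)%nat ->
  Pp s j <= Pp s j'.
Proof.
  intros Hv Hl H1 H2. unfold Pp. rewrite (sumR_seq_split _ j j' H1).
  assert (0 <= sumR (seq j (j' - j)) (fun i => F (s ++ [i]))); [|lra].
  apply sumR_nonneg; intros i Hi. apply in_seq in Hi. apply Hnn.
  - apply valid_snoc; split; auto; lia.
  - rewrite length_app; simpl; lia.
Qed.

Lemma Pp_0 s : Pp s 0 = 0.
Proof. reflexivity. Qed.

Lemma Pp_K s : valid K s -> (length s < L)%nat -> Pp s K = F s.
Proof. intros; unfold Pp; apply Hsum; auto. Qed.

Lemma Pp_bounds s j : valid K s -> (length s < L)%nat -> (j <= K)%nat -> 0 <= Pp s j <= F s.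
Proof.
  intros Hv Hl Hj. rewrite <- (Pp_K s Hv Hl). split.
  - rewrite <- (Pp_0 s). apply Pp_mono; auto; lia.
  - apply Pp_mono; auto.
Qed.

Lemma Pp_S s k : Pp s (S k) = Pp s k + F (s ++ [k]).
Proof. unfold Pp. rewrite seq_S, sumR_app, sumR_cons, sumR_nil. simpl. lra. Qed.

Lemma cond_partial s j : valid K s -> (length s < L)%nat -> (j <= K)%nat ->
  F s * sumR (seq 0 j) (cond F s) = Pp s j.
Proof.
  intros Hv Hl Hj. destruct (Req_dec (F s) 0) as [H0|H0].
  - rewrite H0, Rmult_0_l. pose proof (Pp_bounds s j Hv Hl Hj). lra.
  - rewrite sumR_scal. unfold Pp. apply sumR_ext_in; intros i _. unfold cond. field. exact H0.
Qed.

Lemma width s : valid K s -> (length s <= L)%nat ->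
  snd (interval F s) - fst (interval F s) = F s.
Proof.
  induction s as [|k s IH] using rev_ind; intros Hv Hl.
  - rewrite interval_nil, HF0; simpl; lra.
  - apply valid_snoc in Hv as [Hv Hk]. rewrite length_app in Hl; simpl in Hl.
    rewrite interval_snoc; cbn [fst snd]. rewrite IH by (auto; lia).
    rewrite !cond_partial by (auto; lia). rewrite Pp_S. lra.
Qed.

Lemma child s k : valid K (s ++ [k]) -> (length (s ++ [k]) <= L)%nat ->
  fst (interval F (s ++ [k])) = fst (interval F s) + Pp s k /\
  snd (interval F (s ++ [k])) = fst (interval F s) + Pp s (S k).
Proof.
  intros Hv Hl. apply valid_snoc in Hv as [Hv Hk]. rewrite length_app in Hl; simpl in Hl.
  rewrite interval_snoc; cbn [fst snd]. rewrite width by (auto; lia).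
  rewrite !cond_partial by (auto; lia). split; reflexivity.
Qed.

Lemma nest t s : valid K (s ++ t) -> (length (s ++ t) <= L)%nat ->
  fst (interval F s) <= fst (interval F (s ++ t)) /\ snd (interval F (s ++ t)) <= snd (interval F s).
Proof.
  induction t as [|k t IH] using rev_ind; intros Hv Hl.
  - rewrite app_nil_r; lra.
  - rewrite app_assoc in *. pose proof Hv as Hv'. apply valid_snoc in Hv' as [Hv1 Hk].
    pose proof Hl as Hl'. rewrite length_app in Hl'; simpl in Hl'.
    destruct (IH Hv1 ltac:(lia)) as [H1 H2].
    destruct (child _ _ Hv Hl) as [E1 E2]. rewrite E1, E2.
    pose proof (width (s ++ t) Hv1 ltac:(lia)).
    pose proof (Pp_bounds (s ++ t) k Hv1 ltac:(lia) ltac:(lia)).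
    pose proof (Pp_bounds (s ++ t) (S k) Hv1 ltac:(lia) ltac:(lia)).
    lra.
Qed.

Lemma bounds01 s : valid K s -> (length s <= L)%nat ->
  0 <= fst (interval F s) /\ snd (interval F s) <= 1.
Proof.
  intros Hv Hl. destruct (nest s [] Hv Hl) as [H1 H2]. rewrite interval_nil in *. simpl in *. lra.
Qed.

Lemma disj s : forall s', valid K s -> valid K s' -> length s = length s' -> (length s <= L)%nat ->
  s <> s' ->
  snd (interval F s) <= fst (interval F s') \/ snd (interval F s') <= fst (interval F s).
Proof.
  induction s as [|k s IH] using rev_ind; intros s' Hv Hv' Hlen Hl Hne.
  - destruct s'; [congruence|discriminate].
  - destruct s' as [|k' s'' _] using rev_ind.
    + rewrite length_app in Hlen; simpl in Hlen; lia.
    + rewrite !length_app in Hlen; simpl in Hlen. rewrite length_app in Hl; simpl in Hl.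
      pose proof Hv as Hva. pose proof Hv' as Hvb.
      apply valid_snoc in Hva as [Hv1 Hk]. apply valid_snoc in Hvb as [Hv1' Hk'].
      destruct (child s k Hv ltac:(rewrite length_app; simpl; lia)) as [E1 E2].
      destruct (child s'' k' Hv' ltac:(rewrite length_app; simpl; lia)) as [E1' E2'].
      destruct (list_eq_dec Nat.eq_dec s s'') as [<-|Hns].
      * assert (k <> k') by (intros ->; congruence).
        rewrite E1, E2, E1', E2'.
        destruct (Nat.lt_ge_cases k k').
        -- left. pose proof (Pp_mono s (S k) k' Hv1 ltac:(lia) ltac:(lia) ltac:(lia)). lra.
        -- right. pose proof (Pp_mono s (S k') k Hv1 ltac:(lia) ltac:(lia) ltac:(lia)). lra.
      * destruct (nest [k] s Hv ltac:(rewrite length_app; simpl; lia)) as [N1 N2].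
        destruct (nest [k'] s'' Hv' ltac:(rewrite length_app; simpl; lia)) as [N1' N2'].
        destruct (IH s'' Hv1 Hv1' ltac:(lia) ltac:(lia) Hns); [left|right]; lra.
Qed.

Lemma tele (g : R -> R) m : (m <= L)%nat ->
  sumR (seqs K m) (fun x => g (snd (interval F x)) - g (fst (interval F x))) = g 1 - g 0.
Proof.
  induction m as [|m IH]; intros Hm.
  - simpl seqs. rewrite sumR_cons, sumR_nil, interval_nil. simpl. lra.
  - rewrite sum_seqs_S. rewrite <- IH by lia. apply sumR_ext_in; intros s Hs.
    apply In_seqs in Hs as [Hv Hl].
    pose (h := fun j => g (fst (interval F s) + Pp s j)).
    rewrite (sumR_ext_in _ _ (fun k => h (S k) - h k)).
    + rewrite sumR_tele. unfold h. simpl Nat.add. rewrite Pp_K, Pp_0 by (auto; lia).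
      rewrite <- (width s Hv ltac:(lia)). f_equal; f_equal; lra.
    + intros k Hk. apply in_seq in Hk.
      destruct (child s k ltac:(apply valid_snoc; split; auto; lia)
                  ltac:(rewrite length_app; simpl; lia)) as [E1 E2].
      rewrite E1, E2. reflexivity.
Qed.

End Intervals.

Section Marg.
Variables (N n : nat) (Q : list nat -> R).
Hypothesis Hd : is_dist N n Q.

Lemma marg_nil : marg N n Q [] = 1.
Proof.
  unfold marg. simpl length. rewrite Nat.sub_0_r. destruct Hd as [_ H]. rewrite <- H.
  apply sumR_ext_in; reflexivity.
Qed.

Lemma marg_nn t : valid N t -> (length t <= n)%nat -> 0 <= marg N n Q t.
Proof.
  intros Hv Hl. unfold marg. apply sumR_nonneg; intros u Hu. apply In_seqs in Hu as [Hu1 Hu2].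
  destruct Hd as [H _]. apply H.
  - apply Forall_app; auto.
  - rewrite length_app; lia.
Qed.

Lemma marg_sum t : valid N t -> (length t < n)%nat ->
  sumR (seq 0 N) (fun k => marg N n Q (t ++ [k])) = marg N n Q t.
Proof.
  intros Hv Hl.
  apply eq_trans with (sumR (seq 0 N) (fun k => sumR (seqs N (n - S (length t))) (fun u => Q (t ++ k :: u)))).
  - apply sumR_ext_in; intros k _. unfold marg. rewrite length_app; simpl length.
    replace (length t + 1)%nat with (S (length t)) by lia.
    apply sumR_ext_in; intros u _. rewrite <- app_assoc; reflexivity.
  - unfold marg. replace (n - length t)%nat with (S (n - S (length t)))%nat by lia.
    rewrite sum_seqs_cons. reflexivity.
Qed.

Lemma marg_full y : length y = n -> marg N n Q y = Q y.
Proof.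
  intros Hl. unfold marg. rewrite Hl, Nat.sub_diag. simpl seqs. rewrite sumR_cons, sumR_nil, app_nil_r. lra.
Qed.
End Marg.

Lemma proc_nil M P : is_process M P -> P [] = 1.
Proof.
  intros [_ [H _]]. specialize (H 0%nat). simpl seqs in H. rewrite sumR_cons, sumR_nil in H. lra.
Qed.

Definition go (P Q : list nat -> R) (N n : nat) (x : list nat) :=
  fix go (l : list nat) : option (list nat) :=
     match l with
     | [] => None
     | j :: l' => match find_out P Q N n (firstn j x) with
                  | Some y => Some y
                  | None => go l'
                  end
     end.

Lemma phi_go P Q N n x : phi_int P Q N n x = go P Q N n x (seq 0 (S (length x))).
Proof. reflexivity. Qed.

Lemma go_some P Q N n x l z : go P Q N n x l = Some z ->
  exists j, In j l /\ find_out P Q N n (firstn j x) = Some z.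
Proof.
  induction l as [|j l IH]; simpl; intros H; [discriminate|].
  destruct (find_out P Q N n (firstn j x)) eqn:E.
  - inversion H; subst. exists j; auto.
  - destruct (IH H) as [j' [H1 H2]]. exists j'; auto.
Qed.

Lemma go_none P Q N n x l j : In j l -> find_out P Q N n (firstn j x) <> None ->
  go P Q N n x l <> None.
Proof.
  induction l as [|j' l IH]; simpl; intros Hin Hf; [destruct Hin|].
  destruct (find_out P Q N n (firstn j' x)) eqn:E; [discriminate|].
  destruct Hin as [<-|Hin]; [congruence|]. apply IH; auto.
Qed.

Lemma containedb_spec I J : containedb I J = true <-> fst J <= fst I /\ snd I <= snd J.
Proof.
  unfold containedb. destruct (Rle_dec (fst J) (fst I)); destruct (Rle_dec (snd I) (snd J));
  split; intros H; try discriminate; try tauto; destruct H; contradiction.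
Qed.

Definition clamp u v t := Rmax u (Rmin t v).
Definition st a b t := if Rlt_dec a t then if Rlt_dec t b then b - a else 0 else 0.

Ltac crush := unfold clamp, st, Rmax, Rmin in *;
  repeat match goal with
         | |- context [Rle_dec ?x ?y] =>
             lazymatch x with context [Rle_dec] => fail | _ =>
             lazymatch y with context [Rle_dec] => fail | _ => destruct (Rle_dec x y) end end
         | |- context [Rlt_dec ?x ?y] => destruct (Rlt_dec x y)
         end; lra.

Lemma L1 u v a b : u <= v -> a <= b -> 0 <= clamp u v b - clamp u v a.
Proof. intros; crush. Qed.
Lemma L2 u v a b : u <= a -> b <= v -> a <= b -> clamp u v b - clamp u v a = b - a.
Proof. intros; crush. Qed.
Lemma L3 u v a b : u <= v -> a <= b -> ~ (u <= a /\ b <= v) ->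
  clamp u v b - clamp u v a <= st a b u + st a b v.
Proof.
  intros H1 H2 H3. destruct (Rle_dec u a); destruct (Rle_dec b v); [exfalso; tauto| | |]; crush.
Qed.
Lemma L4 u v : u <= v -> 0 <= u -> v <= 1 -> clamp u v 1 - clamp u v 0 = v - u.
Proof. intros; crush. Qed.
Lemma L5 u v : u <= v -> clamp u v 1 - clamp u v 0 <= v - u.
Proof. intros; crush. Qed.
Lemma L6 a b t e q : a <= b -> 0 < e -> 0 <= q -> (e < b - a -> q = b - a) ->
  st a b t <= q + (clamp (t - e) (t + e) b - clamp (t - e) (t + e) a).
Proof.
  intros H1 H2 H3 H4. destruct (Rlt_dec e (b - a)) as [H|H].
  - rewrite (H4 H). assert (0 <= clamp (t - e) (t + e) b - clamp (t - e) (t + e) a) by (apply L1; lra).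
    unfold st at 1; repeat destruct Rlt_dec; lra.
  - clear H4. crush.
Qed.
Lemma st_nn a b t : a <= b -> 0 <= st a b t.
Proof. intros; crush. Qed.

Lemma log2_lt a b : 0 < a -> a < b -> log2 a < log2 b.
Proof.
  intros. unfold log2, Rdiv. apply Rmult_lt_compat_r.
  - apply Rinv_0_lt_compat. rewrite <- ln_1. apply ln_increasing; lra.
  - apply ln_increasing; auto.
Qed.

Section Main.
Variables (M N : nat) (P : list nat -> R) (Hp : is_process M P).
Variables (n : nat) (Q : list nat -> R) (Hd : is_dist N n Q).

Let HnnP L : forall s, valid M s -> (length s <= L)%nat -> 0 <= P s :=
  fun s Hv _ => proj1 Hp s Hv.
Let HsumP L : forall s, valid M s -> (length s < L)%nat ->
  sumR (seq 0 M) (fun k => P (s ++ [k])) = P s :=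
  fun s Hv _ => proj2 (proj2 Hp) s Hv.

Lemma prob_out_eq m y : valid N y -> length y = n ->
  prob_out P Q M N n m y = sumR (seqs M m) (fun x => P x *
     (if containedb (interval P x) (interval (marg N n Q) y) then 1 else 0)).
Proof.
  intros Hvy Hly. unfold prob_out. apply sumR_ext_in; intros x Hx.
  apply In_seqs in Hx as [Hvx Hlx].
  pose proof (proc_nil M P Hp) as HP0.
  assert (F1 : forall z, phi_int P Q N n x = Some z ->
            In z (seqs N n) /\ containedb (interval P x) (interval (marg N n Q) z) = true).
  { intros z Hz. rewrite phi_go in Hz. apply go_some in Hz as [j [Hj Hf]].
    unfold find_out in Hf. apply find_some in Hf as [Hin Hc]. split; [exact Hin|].
    apply in_seq in Hj. apply containedb_spec in Hc. apply containedb_spec.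
    pose proof (firstn_skipn j x) as E.
    pose proof (nest M m P HP0 (HnnP m) (HsumP m) (skipn j x) (firstn j x)) as HN.
    rewrite E in HN. destruct (HN Hvx ltac:(lia)) as [N1 N2]. lra. }
  assert (F2 : containedb (interval P x) (interval (marg N n Q) y) = true ->
               phi_int P Q N n x <> None).
  { intros Hc. rewrite phi_go. apply (go_none _ _ _ _ _ _ (length x)).
    - apply in_seq; lia.
    - rewrite firstn_all. unfold find_out. intros Hn.
      rewrite (find_none _ _ Hn y) in Hc; [discriminate|]. apply seqs_In; auto. }
  destruct (Req_dec (P x) 0) as [H0|H0]; [rewrite H0, !Rmult_0_l; reflexivity|].
  assert (HPx : 0 < P x) by (pose proof (proj1 Hp x Hvx); lra).
  destruct (containedb (interval P x) (interval (marg N n Q) y)) eqn:Ec.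
  - destruct (phi_int P Q N n x) as [z|] eqn:Ep; [|exfalso; apply (F2 eq_refl); reflexivity].
    destruct (F1 z eq_refl) as [Hz Hcz].
    destruct (list_eq_dec Nat.eq_dec z y) as [->|Hne]; [reflexivity|exfalso].
    apply In_seqs in Hz as [Hvz Hlz].
    pose proof (width M m P HP0 (HnnP m) (HsumP m) x Hvx ltac:(lia)) as Wx.
    apply containedb_spec in Ec, Hcz.
    destruct (disj N n (marg N n Q) (marg_nil N n Q Hd) (marg_nn N n Q Hd) (marg_sum N n Q)
                z y Hvz Hvy ltac:(lia) ltac:(lia) Hne); lra.
  - destruct (phi_int P Q N n x) as [z|] eqn:Ep; [|reflexivity].
    destruct (list_eq_dec Nat.eq_dec z y) as [->|Hne]; [|reflexivity].
    destruct (F1 y eq_refl) as [_ Hc]. congruence.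
Qed.

End Main.

Theorem corollary1 (M N : nat) (P : list nat -> R) :
  is_process M P ->
  (forall lam : R, 0 < lam -> Un_cv (fun m => prob_Sc P M m lam) 0) ->
  forall (n : nat) (Q : list nat -> R), is_dist N n Q ->
  forall y : list nat, valid N y -> length y = n ->
    Un_cv (fun m => prob_out P Q M N n m y) (Q y).
Proof.
  intros Hp Hsc n Q Hd y Hvy Hly.
  pose proof (proc_nil M P Hp) as HP0.
  pose proof (marg_nil N n Q Hd) as HQ0.
  pose proof (marg_nn N n Q Hd) as HQnn.
  pose proof (marg_sum N n Q) as HQsum.
  set (J := interval (marg N n Q) y).
  set (c := fst J). set (d := snd J).
  assert (HJw : d - c = Q y).
  { unfold c, d, J. rewrite (width N n _ HQ0 HQnn HQsum y Hvy ltac:(lia)). apply marg_full; auto. }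
  assert (HJb : 0 <= c /\ d <= 1) by (apply (bounds01 N n _ HQ0 HQnn HQsum y Hvy ltac:(lia))).
  assert (HQy : 0 <= Q y) by (apply (proj1 Hd); auto).
  intros eps Heps.
  set (e := Rmin (eps / 8) (1 / 2)).
  assert (He1 : 0 < e) by (unfold e; apply Rmin_glb_lt; lra).
  assert (He2 : e <= eps / 8) by apply Rmin_l.
  assert (He3 : e < 1) by (pose proof (Rmin_r (eps/8) (1/2)); fold e in H; lra).
  set (lam := log2 (/ e)).
  assert (Hlam : 0 < lam).
  { unfold lam. replace 0 with (log2 1) by (unfold log2; rewrite ln_1; unfold Rdiv; lra).
    apply log2_lt; [lra|]. rewrite <- Rinv_1. apply Rinv_lt_contravar; lra. }
  destruct (Hsc lam Hlam (eps / 4) ltac:(lra)) as [N0 HN0].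
  exists N0. intros m Hm. specialize (HN0 m Hm). unfold R_dist in *.
  rewrite Rminus_0_r in HN0. apply Rabs_def2 in HN0 as [Hps _].
  rewrite prob_out_eq by auto. fold J.
  pose proof (fun s (Hv : valid M s) (_ : (length s <= m)%nat) => proj1 Hp s Hv) as HnnP.
  pose proof (fun s (Hv : valid M s) (_ : (length s < m)%nat) => proj2 (proj2 Hp) s Hv) as HsumP.
  set (A := sumR (seqs M m) (fun x => P x * (if containedb (interval P x) J then 1 else 0))).
  assert (Hov : sumR (seqs M m) (fun x => clamp c d (snd (interval P x)) - clamp c d (fst (interval P x))) = Q y).
  { rewrite (tele M m P HP0 HnnP HsumP (clamp c d) m ltac:(lia)). rewrite L4; lra. }
  assert (Hwx : forall x, In x (seqs M m) ->
     snd (interval P x) - fst (interval P x) = P x /\ 0 <= P x).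
  { intros x Hx. apply In_seqs in Hx as [Hvx Hlx]. split.
    - apply (width M m P HP0 HnnP HsumP x Hvx); lia.
    - apply (proj1 Hp); auto. }
  assert (HAup : A <= Q y).
  { rewrite <- Hov. unfold A. apply sumR_le_in. intros x Hx. destruct (Hwx x Hx) as [W1 W2].
    destruct (containedb (interval P x) J) eqn:Ec.
    - apply containedb_spec in Ec. fold c d in Ec. rewrite L2; lra.
    - rewrite Rmult_0_r. apply L1; lra. }
  assert (Hst : forall t, sumR (seqs M m) (fun x => st (fst (interval P x)) (snd (interval P x)) t)
                        <= prob_Sc P M m lam + 2 * e).
  { intros t. unfold prob_Sc. rewrite sumR_filter. eapply Rle_trans.
    - apply sumR_le_in with (g := fun x =>
        (if (if Rlt_dec (log2 (/ P x)) lam then true else false) then P x else 0)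
        + (clamp (t - e) (t + e) (snd (interval P x)) - clamp (t - e) (t + e) (fst (interval P x)))).
      intros x Hx. destruct (Hwx x Hx) as [W1 W2]. apply L6; [lra|lra| |].
      + destruct (Rlt_dec (log2 (/ P x)) lam); lra.
      + intros Hlt. destruct (Rlt_dec (log2 (/ P x)) lam) as [_|Hn]; [lra|exfalso; apply Hn].
        unfold lam. apply log2_lt.
        * apply Rinv_0_lt_compat; lra.
        * apply Rinv_lt_contravar; [apply Rmult_lt_0_compat|]; lra.
    - rewrite sumR_plus, (tele M m P HP0 HnnP HsumP) by lia.
      pose proof (L5 (t - e) (t + e) ltac:(lra)). lra. }
  assert (Hlow : Q y - A <= prob_Sc P M m lam + 2 * e + (prob_Sc P M m lam + 2 * e)).
  { rewrite <- Hov at 1. unfold A. rewrite <- sumR_minus. eapply Rle_trans.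
    - apply sumR_le_in with (g := fun x => st (fst (interval P x)) (snd (interval P x)) c
                                         + st (fst (interval P x)) (snd (interval P x)) d).
      intros x Hx. destruct (Hwx x Hx) as [W1 W2].
      pose proof (st_nn (fst (interval P x)) (snd (interval P x)) c ltac:(lra)).
      pose proof (st_nn (fst (interval P x)) (snd (interval P x)) d ltac:(lra)).
      destruct (containedb (interval P x) J) eqn:Ec.
      + apply containedb_spec in Ec. fold c d in Ec. rewrite L2; lra.
      + rewrite Rmult_0_r, Rminus_0_r. apply L3; [lra|lra|].
        intros Hcd. rewrite <- Bool.not_true_iff_false in Ec. apply Ec.
        apply containedb_spec. exact Hcd.
    - rewrite sumR_plus. pose proof (Hst c). pose proof (Hst d). lra. }
  apply Rabs_def1; lra.
Qed.
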